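(* In the setting below, for all $\mu_1,\mu_2,\mu_3\in\mathbb F_q^A$, $$\big(\mathsf{CCZ}^{(q)}\big)^{\otimes M}\,|\overline{\mu_1}\rangle|\overline{\mu_2}\rangle|\overline{\mu_3}\rangle=(-1)^{\mathrm{tr}\left(\sum_{b\in B}(\mu_1)_b(\mu_2)_b(\mu_3)_b\right)}|\overline{\mu_1}\rangle|\overline{\mu_2}\rangle|\overline{\mu_3}\rangle,$$ where $(\mathsf{CCZ}^{(q)})^{\otimes M}$ applies $\mathsf{CCZ}^{(q)}$ to the three qudits at position $\alpha$ of the three blocks, for every $\alpha\in M$.
   Context: Let $q=2^l$ ($l\ge2$) and $\mathbb F_q$ the field with $q$ elements. Fix integers $k,m,s$ with $q/3\ge k\ge m\ge s>0$ and $2k\le q-m$. Fix $A\subseteq\mathbb F_q$ with $|A|=k$, $B\subseteq A$ with $|B|=s$, and let $M=\mathbb F_q\setminus B$. $\mathbb F_q[x]_{<d}$ denotes polynomials of degree $<d$, $\phi_M(P)=(P(\alpha))_{\alpha\in M}$, and $C_2^\perp=\phi_M(\{P\in\mathbb F_q[x]_{<m}:P(b)=0\ \forall b\in B\})$. For $a\in A$, $\ell_a(x)=\prod_{a'\in A\setminus\{a\}}\frac{x-a'}{a-a'}$; for $\mu\in\mathbb F_q^A$, $p_\mu=\sum_a\mu_a\ell_a$ and $c_\mu=\phi_M(p_\mu)$. A qudit has Hilbert space $\mathbb C^q$ with orthonormal basis $\{|x\rangle:x\in\mathbb F_q\}$. The trace $\mathrm{tr}:\mathbb F_q\to\mathbb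 F_2$ is $\mathrm{tr}(x)=\sum_{i=0}^{l-1}x^{2^i}$, and $\mathsf{CCZ}^{(q)}|x\rangle|y\rangle|z\rangle=(-1)^{\mathrm{tr}(xyz)}|x\rangle|y\rangle|z\rangle$. The codestate of $\mu$ is $|\overline{\mu}\rangle=|C_2^\perp|^{-1/2}\sum_{\alpha\in C_2^\perp}|c_\mu+\alpha\rangle\in(\mathbb C^q)^{\otimes M}$. *)

(* Defs.v *)
From HB Require Import structures.
From mathcomp Require Import all_boot all_order all_algebra all_field.
Set Implicit Arguments.
Unset Strict Implicit.
Unset Printing Implicit Defensive.
Import Order.TTheory GRing.Theory Num.Theory.
Local Open Scope ring_scope.

Definition subT (F : finFieldType) (S : {set F}) : finType := {x : F | x \in S}.

(* Absolute trace F_{2^l} -> F_2 (value in F, which is 0 or 1). *)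
Definition trF (F : finFieldType) (l : nat) (x : F) : F :=
  \sum_(i < l) x ^+ (2 ^ i).

Definition sgnF (F : finFieldType) (l : nat) (x : F) : algC :=
  if trF l x == 0 then 1 else -1.

(* Words indexed by M = F \ B. *)
Definition word (F : finFieldType) (B : {set F}) := {ffun subT (~: B) -> F}.

Definition phiM (F : finFieldType) (B : {set F}) (P : {poly F}) : word B :=
  [ffun a : subT (~: B) => P.[val a]].

Definition lagr (F : finFieldType) (A : {set F}) (a : F) : {poly F} :=
  \prod_(a' in A :\ a) ((a - a')^-1 *: ('X - a'%:P)).

Definition p_mu (F : finFieldType) (A : {set F}) (mu : {ffun subT A -> F}) : {poly F} :=
  \sum_(a : subT A) mu a *: lagr A (val a).

Definition C2perp (F : finFieldType) (B : {set F}) (m : nat) : {set word B} :=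
  [set phiM B (\poly_(i < m) c`_i) |
     c : m.-tuple F in [set c : m.-tuple F | [forall b in B, (\poly_(i < m) c`_i).[b] == 0]]].

(* Computational basis ket |w>, as a vector (function on basis labels). *)
Definition ket (F : finFieldType) (B : {set F}) (w : word B) : word B -> algC :=
  fun x => (x == w)%:R.

Definition codestate (F : finFieldType) (A B : {set F}) (m : nat)
    (mu : {ffun subT A -> F}) : word B -> algC :=
  fun x => (sqrtC (#|C2perp B m|%:R))^-1 *
           \sum_(al in C2perp B m) ket (phiM B (p_mu mu) + al) x.

Definition tensor3 (F : finFieldType) (B : {set F}) (f g h : word B -> algC)
    : word B * word B * word B -> algC :=
  fun t => f t.1.1 * g t.1.2 * h t.2.

(* CCZ^(q) |x>|y>|z> = (-1)^{tr(xyz)} |x>|y>|z> : its diagonal phase. *)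
Definition CCZq_phase (F : finFieldType) (l : nat) (x y z : F) : algC :=
  sgnF l (x * y * z).

Definition CCZ_tensorM (F : finFieldType) (l : nat) (B : {set F})
    (psi : word B * word B * word B -> algC) : word B * word B * word B -> algC :=
  fun t => (\prod_(al : subT (~: B)) CCZq_phase l (t.1.1 al) (t.1.2 al) (t.2 al)) * psi t.

(* Main.v *)
Require Import Defs.
From HB Require Import structures.
From mathcomp Require Import all_boot all_order all_algebra all_field zify.
Import GRing.Theory Num.Theory.
Local Open Scope ring_scope.

Lemma char2 (F : finFieldType) l : #|F| = (2 ^ l)%N -> 2 \in [pchar F].
Proof. by move=> h; apply: (card_finPcharP h). Qed.

Lemma frob2 (F : finFieldType) l (x y : F) i : #|F| = (2 ^ l)%N ->
  (x + y) ^+ (2 ^ i) = x ^+ (2 ^ i) + y ^+ (2 ^ i).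
Proof.
move=> h; apply: exprDn_pchar; rewrite pnatX pnatE //.
by rewrite (@char2 _ _ h).
Qed.

Lemma trF_add (F : finFieldType) l (x y : F) : #|F| = (2 ^ l)%N ->
  trF l (x + y) = trF l x + trF l y.
Proof. by move=> h; rewrite /trF -big_split /=; apply: eq_bigr => i _; rewrite (frob2 _ _ _ _ _ h). Qed.

Lemma trF01 (F : finFieldType) l (x : F) : (1 <= l)%N -> #|F| = (2 ^ l)%N ->
  trF l x = 0 \/ trF l x = 1.
Proof.
move=> hl h.
have sq : trF l x ^+ 2 = trF l x.
  rewrite /trF (big_morph (fun z : F => z ^+ 2) (id1 := 0) (op1 := +%R)); last 2 first.
  - by move=> a b; rewrite -[2%N]/(2 ^ 1)%N (frob2 _ _ _ _ _ h).
  - by rewrite expr0n.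
  case: l hl h => // l' _ h.
  rewrite big_ord_recr big_ord_recl /=.
  have -> : x ^+ (2 ^ l') ^+ 2 = x ^+ (2 ^ 0) by rewrite -exprM -expnSr -h expf_card expn0 expr1.
  rewrite addrC; congr (_ + _); apply: eq_bigr => i _.
  by rewrite -exprM -expnSr.
have : trF l x * (trF l x - 1) = 0 by rewrite mulrBr mulr1 -expr2 sq subrr.
by move/eqP; rewrite mulf_eq0 subr_eq0 => /orP[/eqP->|/eqP->]; [left|right].
Qed.

Lemma sgnF_add (F : finFieldType) l (x y : F) : (1 <= l)%N -> #|F| = (2 ^ l)%N ->
  sgnF l (x + y) = sgnF l x * sgnF l y.
Proof.
move=> hl h; rewrite /sgnF trF_add //.
case: (trF01 _ _ x hl h) => ->; case: (trF01 _ _ y hl h) => ->;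
  rewrite ?addr0 ?add0r ?eqxx ?oner_eq0 ?mulr1 ?mul1r //.
by rewrite addrr_pchar2 ?eqxx ?mulrNN ?mulr1 // (@char2 _ _ h).
Qed.

Lemma sgnF0 (F : finFieldType) l : sgnF l (0 : F) = 1.
Proof.
rewrite /sgnF /trF big1 ?eqxx // => i _; by rewrite expr0n expn_eq0.
Qed.

Lemma sum_pow (F : finFieldType) l (j : nat) : (1 <= l)%N -> #|F| = (2 ^ l)%N ->
  (j < #|F|.-1)%N -> \sum_(x : F) x ^+ j = 0.
Proof.
move=> hl h hj.
case: j hj => [|j] hj.
  under eq_bigr do rewrite expr0.
  rewrite sumr_const; change #|xpredT| with #|F|.
  rewrite h natrX.
  have -> : (2%:R : F) = 0 by apply: pcharf0 (@char2 _ _ h).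
  by rewrite expr0n; case: l hl {h}.
have [c c0 cj] : exists2 c : F, c != 0 & c ^+ j.+1 != 1.
  case: (boolP [exists c : F, (c != 0) && (c ^+ j.+1 != 1)]) => [/existsP[c /andP[c0 cj]] | /existsPn nc].
    by exists c.
  have := @max_poly_roots _ ('X^(j.+1) - 1) (enum (predC1 (0 : F))).
  rewrite -size_poly_eq0 size_Xn_sub_1 // enum_uniq -cardE cardC1.
  have -> : all (root ('X^(j.+1) - 1)) (enum (predC1 (0 : F))).
    apply/allP => x; rewrite mem_enum inE => x0.
    move: (nc x); rewrite /= x0 /= negbK => xj.
    by rewrite rootE !hornerE subr_eq0.
  by move=> /(_ isT isT isT); rewrite ltnS leqNgt hj.
have : (c ^+ j.+1 - 1) * \sum_(x : F) x ^+ j.+1 = 0.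
  rewrite mulrBl mul1r [X in _ - X](reindex_inj (mulfI c0)) /= mulr_sumr.
  by apply/eqP; rewrite subr_eq0; apply/eqP; apply: eq_bigr => x _; rewrite exprMn.
by move/eqP; rewrite mulf_eq0 subr_eq0 (negPf cj) /= => /eqP.
Qed.

Lemma sum_poly (F : finFieldType) l (P : {poly F}) : (1 <= l)%N -> #|F| = (2 ^ l)%N ->
  (size P <= #|F|.-1)%N -> \sum_(x : F) P.[x] = 0.
Proof.
move=> hl h hP.
under eq_bigr do rewrite horner_coef.
rewrite exchange_big /= big1 // => i _.
by rewrite -mulr_sumr (sum_pow _ _ _ hl h) ?mulr0 //; apply: leq_trans hP.
Qed.

Lemma lagr_eval (F : finFieldType) (A : {set F}) (a b : F) : a \in A -> b \in A ->
  (lagr A a).[b] = (a == b)%:R.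
Proof.
move=> aA bA; rewrite /lagr horner_prod.
case: eqP => [<-|/eqP ab].
  apply: big1 => a' /setD1P[a'a _].
  by rewrite hornerZ hornerXsubC mulVf // subr_eq0 eq_sym.
rewrite (bigD1 b) /=; last by rewrite !inE eq_sym ab.
by rewrite hornerZ hornerXsubC subrr mulr0 mul0r.
Qed.

Lemma pmu_eval (F : finFieldType) (A : {set F}) (mu : {ffun subT A -> F}) (a0 : subT A) :
  (p_mu mu).[val a0] = mu a0.
Proof.
rewrite /p_mu horner_sum (bigD1 a0) //= hornerZ lagr_eval ?(valP a0) // eqxx mulr1.
rewrite big1 ?addr0 // => a /negPf ne.
by rewrite hornerZ lagr_eval ?(valP a) ?(valP a0) // val_eqE ne mulr0.
Qed.

Lemma size_lagr (F : finFieldType) (A : {set F}) (a : F) : a \in A ->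
  (size (lagr A a) <= #|A|)%N.
Proof.
move=> aA; rewrite /lagr.
apply: leq_trans (size_poly_prod_leq _ _) _.
have : (\sum_(i in A :\ a) size ((a - i)^-1 *: ('X - i%:P)) <= \sum_(i in A :\ a) 2)%N.
  apply: leq_sum => i _; apply: leq_trans (size_scale_leq _ _) _; by rewrite size_XsubC.
rewrite sum_nat_const.
have hc := cardsD1 a A; rewrite aA in hc.
set n := #|A :\ a| in hc *.
move=> H.
rewrite /= add1n in hc; move: H; set S := (\sum_(i in _) _)%N => H.
rewrite hc; clearbody S n; lia.
Qed.

Lemma size_pmu (F : finFieldType) (A : {set F}) (mu : {ffun subT A -> F}) :
  (size (p_mu mu) <= #|A|)%N.
Proof.
rewrite /p_mu; apply: (big_ind (fun p : {poly F} => size p <= #|A|)%N).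
- by rewrite size_poly0.
- by move=> p q hp hq; apply: leq_trans (size_polyD _ _) _; rewrite geq_max hp hq.
- by move=> a _; apply: leq_trans (size_scale_leq _ _) _; apply: size_lagr (valP a).
Qed.

Lemma codeP (F : finFieldType) (A B : {set F}) m (mu : {ffun subT A -> F}) (w : word B) :
  codestate m mu w = 0 \/ exists2 Q : {poly F}, (size Q <= m)%N &
     (forall b, b \in B -> Q.[b] = 0) /\ w = phiM B (p_mu mu + Q).
Proof.
case: (pickP [pred al in C2perp B m | phiM B (p_mu mu) + al == w]) => [al /andP[alC /eqP e] | none].
  right; case/imsetP: alC => c; rewrite inE => /forallP hc eal; rewrite {al}eal in e.
  exists (\poly_(i < m) c`_i); first exact: size_poly.
  split; first by move=> b bB; apply/eqP; have := hc b; rewrite bB.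
  by rewrite -e; apply/ffunP => x; rewrite !ffunE hornerD.
left; rewrite /codestate big1 ?mulr0 // => al alC.
by rewrite /ket; move: (none al); rewrite /= alC /= eq_sym => ->.
Qed.

Lemma key (F : finFieldType) l (hl : (1 <= l)%N) (hq : #|F| = (2 ^ l)%N) k m
  (hk : (3 * k <= #|F|)%N) (hkm : (m <= k)%N) (A B : {set F}) (hA : #|A| = k)
  (hBA : B \subset A) (mu1 mu2 mu3 : {ffun subT A -> F}) (Q1 Q2 Q3 : {poly F})
  (s1 : (size Q1 <= m)%N) (s2 : (size Q2 <= m)%N) (s3 : (size Q3 <= m)%N)
  (v1 : forall b, b \in B -> Q1.[b] = 0) (v2 : forall b, b \in B -> Q2.[b] = 0)
  (v3 : forall b, b \in B -> Q3.[b] = 0) :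
  \prod_(al : subT (~: B)) CCZq_phase l (phiM B (p_mu mu1 + Q1) al)
       (phiM B (p_mu mu2 + Q2) al) (phiM B (p_mu mu3 + Q3) al)
  = sgnF l (\sum_(a : subT A | val a \in B) mu1 a * mu2 a * mu3 a).
Proof.
set P := (p_mu mu1 + Q1) * (p_mu mu2 + Q2) * (p_mu mu3 + Q3).
rewrite /CCZq_phase -(big_morph (sgnF l) (fun x y => sgnF_add _ _ x y hl hq) (sgnF0 _ _)).
congr (sgnF l _).
have e1 : \sum_(al : subT (~: B)) phiM B (p_mu mu1 + Q1) al * phiM B (p_mu mu2 + Q2) al *
    phiM B (p_mu mu3 + Q3) al = \sum_(x | x \notin B) P.[x].
  transitivity (\sum_(x in ~: B) P.[x]); last by apply: eq_bigl => x; rewrite inE.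
  by rewrite [RHS]big_sub; apply: eq_bigr => al _; rewrite !ffunE !hornerM.
have e2 : \sum_(a : subT A | val a \in B) mu1 a * mu2 a * mu3 a = \sum_(x | x \in B) P.[x].
  transitivity (\sum_(x in A | x \in B) P.[x]).
    rewrite big_sub_cond; apply: eq_bigr => a aB.
    by rewrite !hornerM !hornerD !pmu_eval v1 // v2 // v3 // !addr0.
  apply: eq_bigl => x; case xB: (x \in B); rewrite ?andbT ?andbF //.
  by rewrite (subsetP hBA).
have sP : (size P <= #|F|.-1)%N.
  have b1 : (size (p_mu mu1 + Q1)%R <= k)%N.
    by apply: leq_trans (size_polyD _ _) _; rewrite geq_max -{1}hA size_pmu (leq_trans s1).
  have b2 : (size (p_mu mu2 + Q2)%R <= k)%N.
    by apply: leq_trans (size_polyD _ _) _; rewrite geq_max -{1}hA size_pmu (leq_trans s2).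
  have b3 : (size (p_mu mu3 + Q3)%R <= k)%N.
    by apply: leq_trans (size_polyD _ _) _; rewrite geq_max -{1}hA size_pmu (leq_trans s3).
  have h12 := size_polyMleq (p_mu mu1 + Q1) (p_mu mu2 + Q2).
  have h123 := size_polyMleq ((p_mu mu1 + Q1) * (p_mu mu2 + Q2)) (p_mu mu3 + Q3).
  rewrite /P; move: h12 h123 b1 b2 b3.
  set x1 := size (p_mu mu1 + Q1); set x2 := size (p_mu mu2 + Q2);
  set x3 := size (p_mu mu3 + Q3); set x123 := size ((p_mu mu1 + Q1) * (p_mu mu2 + Q2) * (p_mu mu3 + Q3))%R; set x12 := size ((p_mu mu1 + Q1) * (p_mu mu2 + Q2))%R.
  move: hk; set N := #|F|; clearbody x1 x2 x3 x12 x123 N. lia.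
have e3 := sum_poly _ _ _ hl hq sP.
rewrite (bigID (mem B)) /= in e3.
rewrite e1 e2; move/eqP: e3; rewrite addr_eq0 => /eqP ->.
by rewrite oppr_pchar2 // (@char2 _ _ hq).
Qed.

Theorem proposition5p10 (F : finFieldType) (l : nat) (hl : (2 <= l)%N)
    (hq : #|F| = (2 ^ l)%N) (k m s : nat)
    (hk : (3 * k <= #|F|)%N) (hkm : (m <= k)%N) (hms : (s <= m)%N) (hs : (0 < s)%N)
    (h2k : (2 * k <= #|F| - m)%N)
    (A B : {set F}) (hA : #|A| = k) (hBA : B \subset A) (hB : #|B| = s)
    (mu1 mu2 mu3 : {ffun subT A -> F}) :
  forall t : word B * word B * word B,
    CCZ_tensorM l (tensor3 (@codestate F A B m mu1) (@codestate F A B m mu2) (@codestate F A B m mu3)) t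
    = sgnF l (\sum_(a : subT A | val a \in B) mu1 a * mu2 a * mu3 a)
      * tensor3 (@codestate F A B m mu1) (@codestate F A B m mu2) (@codestate F A B m mu3) t.
Proof.
move=> [[x y z]]; rewrite /CCZ_tensorM /tensor3 /=.
case: (codeP _ _ _ m mu1 x) => [->|[Q1 s1 [v1 ->]]]; first by rewrite !(mulr0, mul0r).
case: (codeP _ _ _ m mu2 y) => [->|[Q2 s2 [v2 ->]]]; first by rewrite !(mulr0, mul0r).
case: (codeP _ _ _ m mu3 z) => [->|[Q3 s3 [v3 ->]]]; first by rewrite !(mulr0, mul0r).
by rewrite (key _ _ (ltnW hl) hq _ _ hk hkm _ _ hA hBA _ _ _ _ _ _ s1 s2 s3 v1 v2 v3).
Qed.
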